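(* Let $C$ and $D$ be two disjoint sets of first-order formulas such that $|D|\le |C|$ and, for every $\phi\in C$, $(C\cup D)\setminus\{\phi\}\nvDash \phi$. Then $C\cup D$ is equivalent to an independent set of formulas.
   Context: Classical first-order logic; the Axiom of Choice is assumed. Two sets of formulas are equivalent if every formula of each set is a consequence of the other set (equivalently, they have the same models). A set of formulas $T$ is independent if for every $\phi\in T$, $T\setminus\{\phi\}\nvDash\phi$ (equivalently, $(T\setminus\{\phi\})\cup\{\neg\phi\}$ has a model). *)

(* Defs.v *)
From mathcomp Require Import all_boot.
Set Implicit Arguments. Unset Strict Implicit. Unset Printing Implicit Defensive.

(* An arbitrary first-order signature: function symbols (constants are
   0-ary function symbols) and relation symbols, each with an arity. *)
Record signature := Signature {
  Fsym : Type; Fa : Fsym -> nat;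
  Rsym : Type; Ra : Rsym -> nat }.

Section FOL.
Variable S : signature.

Inductive term : Type :=
| Var : nat -> term
| Fun : forall f : Fsym S, ('I_(Fa f) -> term) -> term.

Inductive formula : Type :=
| Fal : formula
| Tru : formula
| Eq  : term -> term -> formula
| Rel : forall r : Rsym S, ('I_(Ra r) -> term) -> formula
| Neg : formula -> formula
| And : formula -> formula -> formula
| Or  : formula -> formula -> formula
| Imp : formula -> formula -> formula
| All : nat -> formula -> formula
| Ex  : nat -> formula -> formula.

Record structure := Structure {
  dom : Type;
  dom_inh : dom;
  fint : forall f : Fsym S, ('I_(Fa f) -> dom) -> dom;
  rint : forall r : Rsym S, ('I_(Ra r) -> dom) -> Prop }.

Definition upd (M : structure) (v : nat -> dom M) (n : nat) (d : dom M) :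
  nat -> dom M := fun m => if m == n then d else v m.

Fixpoint teval (M : structure) (v : nat -> dom M) (t : term) : dom M :=
  match t with
  | Var n => v n
  | Fun f a => @fint M f (fun i => teval v (a i))
  end.

Fixpoint sat (M : structure) (v : nat -> dom M) (phi : formula) : Prop :=
  match phi with
  | Fal => False
  | Tru => True
  | Eq t1 t2 => teval v t1 = teval v t2
  | Rel r a => @rint M r (fun i => teval v (a i))
  | Neg p => ~ sat v p
  | And p q => sat v p /\ sat v q
  | Or p q => sat v p \/ sat v q
  | Imp p q => sat v p -> sat v q
  | All n p => forall d : dom M, sat (upd v n d) p
  | Ex n p => exists d : dom M, sat (upd v n d) p
  end.

Definition fset := formula -> Prop.

Definition entails (T : fset) (phi : formula) : Prop :=
  forall (M : structure) (v : nat -> dom M),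
    (forall psi, T psi -> sat v psi) -> sat v phi.

Definition setminus1 (T : fset) (phi : formula) : fset :=
  fun psi => T psi /\ psi <> phi.

Definition fsetU (T U : fset) : fset := fun psi => T psi \/ U psi.

Definition equivalent (T U : fset) : Prop :=
  (forall phi, U phi -> entails T phi) /\ (forall phi, T phi -> entails U phi).

Definition independent (T : fset) : Prop :=
  forall phi, T phi -> ~ entails (setminus1 T phi) phi.

Definition fdisjoint (T U : fset) : Prop := forall phi, ~ (T phi /\ U phi).

(* |D| <= |C| : there is an injection from D into C. *)
Definition card_le (D C : fset) : Prop :=
  exists f : formula -> formula,
    (forall x, D x -> C (f x)) /\
    (forall x y, D x -> D y -> f x = f y -> x = y).

End FOL.

(* Main.v *)
Require Import Defs.
From Stdlib Require Import Classical.
From mathcomp Require Import all_boot.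

Theorem lemma2 (S : signature) (C D : fset S) :
  fdisjoint C D ->
  card_le D C ->
  (forall phi, C phi -> ~ entails (setminus1 (fsetU C D) phi) phi) ->
  exists T : fset S, independent T /\ equivalent (fsetU C D) T.
Proof.
  move=> Hdis [f [HfC Hfi]] Hind.
  pose T : fset S := fun t => (C t /\ ~ (exists d, D d /\ f d = t)) \/
                              (exists d, D d /\ t = And (f d) d).
  exists T; split.
  - move=> t Tt Hent.
    case: Tt => [[Ct Hn]|[d [Dd E0]]]; last subst t.
    + apply: (Hind t Ct) => M v Hv; apply: Hent => psi [Tpsi Hne].
      case: Tpsi => [[Cp _]|[d [Dd Hp]]].
      * by apply: Hv; split; [left|].
      * subst psi; split; apply: Hv; split.
        -- by left; apply: HfC.
        -- by move=> E; apply: Hn; exists d.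
        -- by right.
        -- by move=> E; subst; apply: (Hdis t); split.
    + apply: (Hind (f d) (HfC d Dd)) => M v Hv.
      suff: sat v (And (f d) d) by case.
      apply: Hent => psi [Tpsi Hne].
      case: Tpsi => [[Cp Hn]|[d' [Dd' Hp]]].
      * apply: Hv; split; [by left|].
        by move=> E; apply: Hn; exists d.
      * subst psi.
        have Hdd : d' <> d by move=> E; subst; apply: Hne.
        have Hff : f d' <> f d by move=> E; apply: Hdd; apply: Hfi.
        split; apply: Hv; split.
        -- by left; apply: HfC.
        -- exact: Hff.
        -- by right.
        -- by move=> E; apply: (Hdis (f d)); split; [apply: HfC|rewrite -E].
  - split.
    + move=> t Tt M v Hv.
      case: Tt => [[Ct _]|[d [Dd E0]]]; last subst t.
      * by apply: Hv; left.
      * by split; apply: Hv; [left; apply: HfC|right].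
    + move=> phi Hphi M v Hv.
      case: Hphi => [Cp|Dp].
      * case: (classic (exists d, D d /\ f d = phi)) => [[d [Dd E]]|Hn].
        -- have : sat v (And (f d) d) by apply: Hv; right; exists d.
           by rewrite E; case.
        -- by apply: Hv; left.
      * have : sat v (And (f phi) phi) by apply: Hv; right; exists phi.
        by case.
Qed.
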